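(* For every $N>1$ there exist connected graphs $H\subsetneq G$ ($H$ a proper subgraph of $G$) with $\chi(H)=\chi(G)$ satisfying $N\,\mathrm{sn}(H)<\mathrm{sn}(G)$. The same holds with $\underline{\mathrm{lcs}}$ in place of $\mathrm{sn}$: for every $N>1$ there exist such $H\subsetneq G$ with $N\,\underline{\mathrm{lcs}}(H)<\underline{\mathrm{lcs}}(G)$.
   Context: All graphs are finite and simple. For a graph $G=(V,E)$ with $k=\chi(G)$, a proper $k$-colouring is a map $c:V\to[k]$ with $c(u)\neq c(v)$ for every edge $uv$. A set $S\subseteq V$ is a determining set for $(G,c)$ if there is no proper $k$-colouring $c'\neq c$ with $c'(s)=c(s)$ for all $s\in S$; a critical set is an inclusion-minimal determining set. $\mathrm{scs}(G,c)$ and $\mathrm{lcs}(G,c)$ are the sizes of a smallest resp. largest critical set for $(G,c)$. $\mathrm{sn}(G)=\min_c\mathrm{scs}(G,c)$ and $\underline{\mathrm{lcs}}(G)=\min_c\mathrm{lcs}(G,c)$, minima over all proper $\chi(G)$-colourings $c$. *)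

(* Defs.v *)
From mathcomp Require Import all_boot all_order.
Set Implicit Arguments. Unset Strict Implicit. Unset Printing Implicit Defensive.

Section Graphs.
Variable T : finType.
Variable e : rel T.

Definition simple_graph : Prop := symmetric e /\ irreflexive e.

Definition connected_graph : Prop :=
  0 < #|T| /\ forall x y : T, connect e x y.

Definition proper_col (k : nat) (c : {ffun T -> 'I_k}) : bool :=
  [forall x, forall y, e x y ==> (c x != c y)].

(* chromatic number: least k admitting a proper k-colouring.
   (The disjunct #|T| <= k only guarantees termination of ex_minn; for a
    simple graph #|T| colours always suffice, so it does not change the value.) *)
Definition chi_pred (k : nat) : bool :=
  [exists c : {ffun T -> 'I_k}, proper_col c] || (#|T| <= k).

Lemma chi_pred_ex : exists k, chi_pred k.
Proof. by exists #|T|; rewrite /chi_pred leqnn orbT. Qed.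

Definition chi : nat := ex_minn chi_pred_ex.

Definition determining (k : nat) (c : {ffun T -> 'I_k}) (S : {set T}) : bool :=
  [forall c' : {ffun T -> 'I_k},
     (proper_col c' && [forall s in S, c' s == c s]) ==> (c' == c)].

Definition critical (k : nat) (c : {ffun T -> 'I_k}) (S : {set T}) : bool :=
  determining c S && [forall S' : {set T}, (S' \proper S) ==> ~~ determining c S'].

(* smallest / largest size of a critical set (critical sets always exist,
   e.g. inside V, and have size <= #|T|, so the defaults are never reached) *)
Definition scs (k : nat) (c : {ffun T -> 'I_k}) : nat :=
  \big[minn/#|T|]_(S : {set T} | critical c S) #|S|.
Definition lcs (k : nat) (c : {ffun T -> 'I_k}) : nat :=
  \max_(S : {set T} | critical c S) #|S|.

Definition sn : nat :=
  \big[minn/#|T|]_(c : {ffun T -> 'I_chi} | proper_col c) scs c.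
Definition lcs_min : nat :=
  \big[minn/#|T|]_(c : {ffun T -> 'I_chi} | proper_col c) lcs c.

End Graphs.

(* H (on T1, edges e1) is (isomorphic to) a proper subgraph of G (on T2, edges e2)
   via the injective vertex map f *)
Definition proper_subgraph (T1 T2 : finType) (e1 : rel T1) (e2 : rel T2)
  (f : T1 -> T2) : Prop :=
  injective f /\ (forall x y, e1 x y -> e2 (f x) (f y)) /\
  (#|T1| < #|T2| \/ exists x y, e2 (f x) (f y) /\ ~~ e1 x y).

(* Main.v *)
Require Import Defs.
From mathcomp Require Import all_boot all_order.
From mathcomp Require Import zify.
Set Implicit Arguments. Unset Strict Implicit. Unset Printing Implicit Defensive.

Definition gr (n : nat) : rel 'I_n.+3 := fun x y =>
  (val x != val y) && [|| (val x < 3) && (val y < 3), val x == 0 | val y == 0].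

Arguments gr : clear implicits.

Lemma gr_simple n : simple_graph (gr n).
Proof.
split.
- move=> x y; rewrite /gr eq_sym; congr (_ && _).
  by case: (val x < 3); case: (val y < 3); case: (val x == 0); case: (val y == 0).
- by move=> x; rewrite /gr eqxx.
Qed.

Lemma gr_conn n : connected_graph (gr n).
Proof.
split; first by rewrite card_ord.
have h : forall x : 'I_n.+3, connect (gr n) x ord0 /\ connect (gr n) ord0 x.
  move=> x; case: (eqVneq x ord0) => [->|hx]; first by rewrite connect0.
  have hv : val x != 0 by apply: contra hx => /eqP h; apply/eqP/val_inj.
  split; apply: connect1; rewrite /gr /= ?orbT andbT; first by [].
  by rewrite eq_sym.

move=> x y; case: (h x) => h1 _; case: (h y) => _ h2.
exact: connect_trans h1 h2.
Qed.

Lemma third k (a b : 'I_k) : 3 <= k -> exists z : 'I_k, (z != a) && (z != b).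
Proof.
move=> hk.
pose v := if (0 != val a) && (0 != val b) then 0 else
          if (1 != val a) && (1 != val b) then 1 else 2.
have hv : v < k by rewrite /v; case: ifP => _; [lia|case: ifP => _; lia].
exists (Ordinal hv).
have : (v != val a) && (v != val b).
  rewrite /v; case: ifP => // h1; case: ifP => // h2.
  move: h1 h2; case: a b {hv v} => a ha [b hb] /=. lia.
by case/andP => h1 h2; apply/andP; split.
Qed.

Lemma det_contains n k (c : {ffun 'I_n.+3 -> 'I_k}) (S : {set 'I_n.+3}) (p : 'I_n.+3) :
  3 <= k -> proper_col (gr n) c -> determining (gr n) c S -> 3 <= val p -> p \in S.
Proof.
move=> hk hc hd hp; apply/negPn/negP => hpS.
have [z /andP [hz1 hz2]] := third (c p) (c ord0) hk.
pose c' := [ffun y => if y == p then z else c y].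
have hp0 : val p != 0 by lia.
have nbr : forall y, gr n p y -> y = ord0.
  move=> y; rewrite /gr; have -> : val p < 3 = false by lia.
  rewrite /= (negbTE hp0) /= => /andP [_ /eqP h]; exact: val_inj.
have nbr' : forall y, gr n y p -> y = ord0.
  by move=> y hy; apply: nbr; move: (proj1 (gr_simple n) y p); rewrite hy.
have hc' : proper_col (gr n) c'.
  apply/forallP => x; apply/forallP => y; apply/implyP => hxy.
  rewrite !ffunE.
  case: (eqVneq x p) => [ex|nx]; case: (eqVneq y p) => [ey|ny].
  - by subst; move: hxy; rewrite (proj2 (gr_simple n)).
  - by subst x; rewrite (nbr y hxy).
  - by subst y; rewrite (nbr' x hxy) eq_sym.
  - by move/forallP: hc => /(_ x) /forallP /(_ y) /implyP; apply.
move/forallP: hd => /(_ c'); rewrite hc' /=.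
have -> : [forall s in S, c' s == c s].
  apply/forall_inP => s hs; rewrite ffunE; case: (eqVneq s p) => // es.
  by move: hs; rewrite es (negbTE hpS).
move=> /implyP /(_ isT) /eqP /ffunP /(_ p); rewrite ffunE eqxx => h.
by rewrite h eqxx in hz1.
Qed.

Lemma chi_gr n : chi (gr n) = 3.
Proof.
rewrite /chi; case: ex_minnP => m hm hmin.
apply/eqP; rewrite eqn_leq; apply/andP; split.
- apply: hmin; rewrite /chi_pred; apply/orP; left; apply/existsP.
  exists [ffun x : 'I_n.+3 => (inord (minn (val x) 2) : 'I_3)].
  apply/forallP => x; apply/forallP => y; apply/implyP.
  rewrite /gr /= => /andP [h1 h2]; rewrite !ffunE.
  by rewrite -val_eqE /= !inordK; lia.
- move: hm; rewrite /chi_pred; case/orP => [/existsP [c hc] | hT]; last first.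
    by move: hT; rewrite card_ord; lia.
  have E : forall a b : 'I_n.+3, gr n a b -> val (c a) != val (c b).
    by move=> a b hab; move/forallP: hc => /(_ a) /forallP /(_ b) /implyP /(_ hab).
  have e01 := E (inord 0) (inord 1).
  have e02 := E (inord 0) (inord 2).
  have e12 := E (inord 1) (inord 2).
  rewrite /gr /= !inordK // in e01 e02 e12.
  have := e01 isT; have := e02 isT; have := e12 isT.
  have := ltn_ord (c (inord 0)); have := ltn_ord (c (inord 1)); have := ltn_ord (c (inord 2)).
  simpl; lia.
Qed.

Lemma sn_le (T : finType) (e : rel T) : sn e <= #|T|.
Proof.
rewrite /sn; apply: (big_ind (fun x => x <= #|T|)) => //.
- by move=> x y hx _; rewrite geq_min hx.
- move=> c _; rewrite /scs; apply: (big_ind (fun x => x <= #|T|)) => //.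
  + by move=> x y hx _; rewrite geq_min hx.
  + by move=> S _; apply: max_card.
Qed.

Lemma lcs_min_le (T : finType) (e : rel T) : lcs_min e <= #|T|.
Proof.
rewrite /lcs_min; apply: (big_ind (fun x => x <= #|T|)) => //.
- by move=> x y hx _; rewrite geq_min hx.
- move=> c _; rewrite /lcs; apply: (big_ind (fun x => x <= #|T|)) => //.
  + by move=> x y hx hy; rewrite geq_max hx hy.
  + by move=> S _; apply: max_card.
Qed.

Definition pend n (i : 'I_n) : 'I_n.+3 :=
  @Ordinal n.+3 (3 + i) (etrans (ltn_add2l 3 i n) (ltn_ord i)).

Lemma det_card n (c : {ffun 'I_n.+3 -> 'I_(chi (gr n))}) S :
  proper_col (gr n) c -> determining (gr n) c S -> n <= #|S|.
Proof.
move=> hc hd.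
have inj : injective (@pend n).
  by move=> i j /(congr1 val) /= h; apply: val_inj => /=; lia.
have sub : (@pend n) @: [set: 'I_n] \subset S.
  apply/subsetP => x /imsetP [i _ ->]; apply: (det_contains (c:=c)) => //.
  - by rewrite chi_gr.
by have := subset_leq_card sub; rewrite card_imset // cardsT card_ord.
Qed.

Lemma sn_ge n : n <= sn (gr n).
Proof.
rewrite /sn; apply: (big_ind (fun x => n <= x)).
- by rewrite card_ord; lia.
- by move=> x y hx hy; rewrite leq_min hx hy.
- move=> c hc; rewrite /scs; apply: (big_ind (fun x => n <= x)).
  + by rewrite card_ord; lia.
  + by move=> x y hx hy; rewrite leq_min hx hy.
  + by move=> S /andP [hd _]; apply: det_card hd.
Qed.

Lemma lcs_ge n : n <= lcs_min (gr n).
Proof.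
rewrite /lcs_min; apply: (big_ind (fun x => n <= x)).
- by rewrite card_ord; lia.
- by move=> x y hx hy; rewrite leq_min hx hy.
- move=> c hc.
  have detT : determining (gr n) c setT.
    apply/forallP => c'; apply/implyP => /andP [_ /forall_inP h].
    by apply/eqP/ffunP => x; apply/eqP; apply: h; rewrite inE.
  have [S /minsetP [hd hmin] _] := minset_exists detT.
  have crit : critical (gr n) c S.
    rewrite /critical hd /=; apply/forallP => S'; apply/implyP => hp.
    apply/negP => hd'.
    have hsub := proper_sub hp.
    by move: hp; rewrite (hmin S' hd' hsub) properxx.
  apply: leq_trans (det_card hc hd) _.
  exact: (leq_bigmax_cond S crit).
Qed.

Lemma sub_ok n : proper_subgraph (gr 0) (gr n.+1) (widen_ord (isT : 3 <= n.+4)).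
Proof.
split; first by move=> x y /(congr1 val) /= h; apply: val_inj.
split; first by [].
by left; rewrite !card_ord.
Qed.

Theorem proposition6 :
  (forall N : nat, 1 < N ->
    exists (T1 T2 : finType) (e1 : rel T1) (e2 : rel T2) (f : T1 -> T2),
      [/\ simple_graph e1, simple_graph e2, connected_graph e1,
          connected_graph e2 & proper_subgraph e1 e2 f] /\
      chi e1 = chi e2 /\ N * sn e1 < sn e2) /\
  (forall N : nat, 1 < N ->
    exists (T1 T2 : finType) (e1 : rel T1) (e2 : rel T2) (f : T1 -> T2),
      [/\ simple_graph e1, simple_graph e2, connected_graph e1,
          connected_graph e2 & proper_subgraph e1 e2 f] /\
      chi e1 = chi e2 /\ N * lcs_min e1 < lcs_min e2).
Proof.
split=> N _.
- exists 'I_3, 'I_(3 * N).+4, (gr 0), (gr (3 * N).+1), (widen_ord (isT : 3 <= (3 * N).+4)).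
  split; first by split; [exact: gr_simple|exact: gr_simple|exact: gr_conn|exact: gr_conn|exact: sub_ok].
  split; first by rewrite !chi_gr.
  have h1 := sn_le (gr 0); rewrite card_ord in h1.
  have h2 := sn_ge (3 * N).+1.
  have h3 : N * sn (gr 0) <= N * 3 by rewrite leq_mul2l h1 orbT.
  apply: (leq_ltn_trans h3); apply: leq_trans h2; by rewrite mulnC.
- exists 'I_3, 'I_(3 * N).+4, (gr 0), (gr (3 * N).+1), (widen_ord (isT : 3 <= (3 * N).+4)).
  split; first by split; [exact: gr_simple|exact: gr_simple|exact: gr_conn|exact: gr_conn|exact: sub_ok].
  split; first by rewrite !chi_gr.
  have h1 := lcs_min_le (gr 0); rewrite card_ord in h1.
  have h2 := lcs_ge (3 * N).+1.
  have h3 : N * lcs_min (gr 0) <= N * 3 by rewrite leq_mul2l h1 orbT.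
  apply: (leq_ltn_trans h3); apply: leq_trans h2; by rewrite mulnC.
Qed.
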